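(* For $\epsilon>0$ and $\Delta\in\mathbb{R}$ let $\mathrm{LB}(\alpha,\epsilon,\Delta):=\alpha\Delta+\alpha\int_{\alpha}^{1}\frac{1-t}{t(1-t)+\epsilon}\,dt+(1-\alpha)\int_{0}^{\alpha}\frac{t}{t(1-t)+\epsilon}\,dt$ for $\alpha\in[0,1]$, and $$\alpha^{*}_{\mathrm{approx}}(\epsilon,\Delta):=\frac{1-\sqrt{1+4\epsilon}}{2}+\frac{\sqrt{1+4\epsilon}}{1+e^{-\sqrt{1+4\epsilon}\,\Delta}}.$$ Then the maximizer of $\mathrm{LB}(\cdot,\epsilon,\Delta)$ over $\alpha\in[0,1]$ equals $\alpha^{*}_{\mathrm{approx}}(\epsilon,\Delta)$ if and only if $|\Delta|\le \frac{1}{\sqrt{1+4\epsilon}}\log\frac{(\sqrt{1+4\epsilon}+1)^2}{4\epsilon}$. Moreover, $\frac{1}{\sqrt{1+4\epsilon}}\log\frac{(\sqrt{1+4\epsilon}+1)^2}{4\epsilon}=-\log\epsilon+O(\epsilon\log\epsilon)$ as $\epsilon\to0^{+}$. *)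

(* Defs.v *)
From Stdlib Require Import Reals.
From Coquelicot Require Import Coquelicot.
Open Scope R_scope.

Definition LB (eps Delta alpha : R) : R :=
  alpha * Delta
  + alpha * RInt (fun t => (1 - t) / (t * (1 - t) + eps)) alpha 1
  + (1 - alpha) * RInt (fun t => t / (t * (1 - t) + eps)) 0 alpha.

Definition alpha_approx (eps Delta : R) : R :=
  (1 - sqrt (1 + 4 * eps)) / 2
  + sqrt (1 + 4 * eps) / (1 + exp (- sqrt (1 + 4 * eps) * Delta)).

Definition is_maximizer (eps Delta a : R) : Prop :=
  0 <= a <= 1 /\ forall b, 0 <= b <= 1 -> LB eps Delta b <= LB eps Delta a.

Definition threshold (eps : R) : R :=
  / sqrt (1 + 4 * eps) * ln ((sqrt (1 + 4 * eps) + 1) ^ 2 / (4 * eps)).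

(* Main.v *)
Require Import Defs.
From Stdlib Require Import Reals Lra Psatz.
From Coquelicot Require Import Coquelicot.
Open Scope R_scope.
Definition Fg (p m s x : R) := -(p/s) * ln(p - x) + (m/s) * ln(x - m).
Definition Lc p m s D a := a*D + a*(Fg p m s (1-a) - Fg p m s 0) + (1-a)*(Fg p m s a - Fg p m s 0).
Definition Dg p m s D a := D + / s * (ln (p - a) - ln (a - m)).
Lemma Lc_der p m s e D a : p + m = 1 -> p - m = s -> p*m = -e -> 0 < s -> m < a < p ->
  is_derive (Lc p m s D) a (Dg p m s D a).
Proof.
intros H1 H2 H3 Hs Hx. unfold Lc, Fg, Dg. auto_derive.
- lra.
- replace (p + - (1 + - a)) with (a - m) by lra.
  replace (1 + - a + - m) with (p - a) by lra.
  replace (p + - a) with (p - a) by lra.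
  replace (a + - m) with (a - m) by lra.
  set (L1 := ln (p - a)). set (L2 := ln (a - m)). set (L3 := ln (p - 0)). set (L4 := ln (0 - m)).
  subst s. assert (p = 1 - m) by lra. subst p. field. lra.
Qed.
Lemma Fg_der p m s e x : p + m = 1 -> p - m = s -> p*m = -e -> 0 < s -> m < x < p ->
  is_derive (Fg p m s) x (x/(x*(1-x)+e)).
Proof.
intros H1 H2 H3 Hs Hx. unfold Fg. auto_derive.
- lra.
- replace e with (-(p*m)) by lra. subst s. assert (p = 1 - m) by lra. subst p.
  field. repeat split; try lra. nra.
Qed.
Lemma Gg_der p m s e x : p + m = 1 -> p - m = s -> p*m = -e -> 0 < s -> m < x < p ->
  is_derive (fun y => - Fg p m s (1 - y)) x ((1-x)/(x*(1-x)+e)).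
Proof.
intros H1 H2 H3 Hs Hx. unfold Fg. auto_derive.
- lra.
- replace e with (-(p*m)) by lra. subst s. assert (p = 1 - m) by lra. subst p.
  field. repeat split; try lra. nra.
Qed.
Lemma LB_eq p m s e D a : p + m = 1 -> p - m = s -> p*m = -e -> 0 < s -> m < 0 -> 1 < p ->
  0 < e -> 0 <= a <= 1 -> LB e D a = Lc p m s D a.
Proof.
intros H1 H2 H3 Hs Hm Hp He Ha.
assert (I1 : is_RInt (fun t => t / (t * (1 - t) + e)) 0 a (minus (Fg p m s a) (Fg p m s 0))).
{ apply (is_RInt_derive (Fg p m s)).
  - intros x Hx. rewrite Rmin_left in Hx by lra. rewrite Rmax_right in Hx by lra.
    apply (Fg_der p m s e); lra.
  - intros x Hx. rewrite Rmin_left in Hx by lra. rewrite Rmax_right in Hx by lra.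
    apply (@ex_derive_continuous R_AbsRing R_NormedModule). auto_derive. nra. }
assert (I2 : is_RInt (fun t => (1 - t) / (t * (1 - t) + e)) a 1
   (minus (- Fg p m s (1 - 1)) (- Fg p m s (1 - a)))).
{ apply (is_RInt_derive (fun y => - Fg p m s (1 - y))).
  - intros x Hx. rewrite Rmin_left in Hx by lra. rewrite Rmax_right in Hx by lra.
    apply (Gg_der p m s e); lra.
  - intros x Hx. rewrite Rmin_left in Hx by lra. rewrite Rmax_right in Hx by lra.
    apply (@ex_derive_continuous R_AbsRing R_NormedModule). auto_derive. nra. }
unfold LB, Lc. rewrite (is_RInt_unique _ _ _ _ I1), (is_RInt_unique _ _ _ _ I2).
unfold minus, plus, opp; simpl. replace (1 - 1) with 0 by ring. ring.
Qed.
Lemma Dg_decr p m s D x y : 0 < s -> m < x -> x < y -> y < p -> Dg p m s D y < Dg p m s D x.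
Proof.
intros Hs H1 H2 H3. unfold Dg.
assert (ln (p - y) < ln (p - x)) by (apply ln_increasing; lra).
assert (ln (x - m) < ln (y - m)) by (apply ln_increasing; lra).
assert (0 < / s) by (apply Rinv_0_lt_compat; lra).
nra.
Qed.

Lemma Dg_decr_le p m s D x y : 0 < s -> m < x -> x <= y -> y < p -> Dg p m s D y <= Dg p m s D x.
Proof.
intros Hs H1 H2 H3. destruct (Req_dec x y) as [<-|]. lra.
left. apply Dg_decr; lra.
Qed.

Lemma strict_max p m s e D a b : p + m = 1 -> p - m = s -> p*m = -e -> 0 < s -> m < 0 -> 1 < p ->
  0 <= a <= 1 -> (forall b, 0 <= b <= 1 -> Dg p m s D a * (b - a) <= 0) ->
  0 <= b <= 1 -> b <> a -> Lc p m s D b < Lc p m s D a.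
Proof.
intros H1 H2 H3 Hs Hm Hp Ha HP Hb Hba.
specialize (HP b Hb).
destruct (Rlt_or_le a b) as [Hlt|Hle].
- destruct (MVT_cor2 (Lc p m s D) (Dg p m s D) a b Hlt) as [c [Hc1 Hc2]].
  { intros c Hc. apply is_derive_Reals. apply (Lc_der p m s e); lra. }
  assert (Dg p m s D c < Dg p m s D a) by (apply Dg_decr; lra).
  nra.
- assert (Hlt : b < a) by lra.
  destruct (MVT_cor2 (Lc p m s D) (Dg p m s D) b a Hlt) as [c [Hc1 Hc2]].
  { intros c Hc. apply is_derive_Reals. apply (Lc_der p m s e); lra. }
  assert (Dg p m s D a < Dg p m s D c) by (apply Dg_decr; lra).
  nra.
Qed.

Lemma asym eps : 0 < eps < exp (-1) ->
  Rabs (threshold eps - (- ln eps)) <= 4 * Rabs (eps * ln eps).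
Proof.
intros [He He1]. unfold threshold.
set (s := sqrt (1 + 4 * eps)).
assert (Hss : s * s = 1 + 4 * eps) by (apply sqrt_sqrt; lra).
assert (Hs1 : 1 < s).
{ assert (Hq1 : sqrt 1 < sqrt (1 + 4 * eps)) by (apply sqrt_lt_1_alt; lra). rewrite sqrt_1 in Hq1. exact Hq1. }
assert (Hs2 : s - 1 <= 2 * eps) by nra.
set (h := (s + 1) / 2).
assert (Hh : 1 <= h) by (unfold h; lra).
assert (E : (s + 1) ^ 2 / (4 * eps) = (h * h) / eps) by (unfold h; field; lra).
rewrite E, ln_div, ln_mult by (unfold h; nra).
assert (Hl0 : 0 <= ln h) by (rewrite <- ln_1; apply ln_le; lra).
assert (Hl1 : ln h <= h - 1).
{ pose proof (exp_ineq1_le (ln h)). rewrite exp_ln in H by lra. lra. }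
assert (Hle : ln eps < -1).
{ rewrite <- (ln_exp (-1)). apply ln_increasing; lra. }
set (v := / s).
assert (Hv : s * v = 1) by (unfold v; field; lra).
assert (Hv0 : 0 < v) by (unfold v; apply Rinv_0_lt_compat; lra).
assert (Hv1 : v < 1) by nra.
assert (Hv2 : 1 - v <= 2 * eps) by nra.
assert (A1 : 0 <= 2 * ln h * v) by nra.
assert (Hh2 : h - 1 = (s - 1) / 2) by (unfold h; field).
assert (Hl2 : 2 * ln h <= s - 1) by lra.
assert (A3 : 2 * ln h * v <= (s - 1) * v) by (apply Rmult_le_compat_r; lra).
assert (A2 : 2 * ln h * v <= 2 * eps) by nra.
assert (B1 : 0 <= (- ln eps) * (1 - v)) by nra.
assert (B2 : (- ln eps) * (1 - v) <= (- ln eps) * (2 * eps)) by nra.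
replace (v * (ln h + ln h - ln eps) - - ln eps) with (2 * ln h * v - (- ln eps) * (1 - v)) by ring.
rewrite (Rabs_left (eps * ln eps)) by nra.
unfold Rabs. destruct (Rcase_abs _); nra.
Qed.

Theorem lemma5 :
  (forall eps Delta : R, 0 < eps ->
     (exists! a, is_maximizer eps Delta a) /\
     (forall a, is_maximizer eps Delta a ->
        (a = alpha_approx eps Delta <-> Rabs Delta <= threshold eps)))
  /\
  (exists C delta : R, 0 < delta /\
     forall eps, 0 < eps < delta ->
       Rabs (threshold eps - (- ln eps)) <= C * Rabs (eps * ln eps)).
Proof.
split.
2:{ exists 4, (exp (-1)). split. apply exp_pos. apply asym. }
intros eps Delta He.
unfold alpha_approx, threshold.
set (s := sqrt (1 + 4 * eps)).
assert (Hss : s * s = 1 + 4 * eps) by (apply sqrt_sqrt; lra).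
assert (Hs1 : 1 < s).
{ assert (Hq1 : sqrt 1 < sqrt (1 + 4 * eps)) by (apply sqrt_lt_1_alt; lra). rewrite sqrt_1 in Hq1. exact Hq1. }
set (p := (1 + s) / 2). set (m := (1 - s) / 2).
assert (H1 : p + m = 1) by (unfold p, m; field).
assert (H2 : p - m = s) by (unfold p, m; field).
assert (H3 : p * m = - eps) by (unfold p, m; nra).
assert (Hs : 0 < s) by lra.
assert (Hm : m < 0) by (unfold m; lra).
assert (Hp : 1 < p) by (unfold p; lra).
set (P := fun a => 0 <= a <= 1 /\ forall b, 0 <= b <= 1 -> Dg p m s Delta a * (b - a) <= 0).
assert (HPmax : forall a, P a -> is_maximizer eps Delta a).
{ intros a [Ha HP]. split; [exact Ha|]. intros b Hb.
  rewrite (LB_eq p m s eps Delta b), (LB_eq p m s eps Delta a) by assumption.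
  destruct (Req_dec b a) as [->|Hne]. lra.
  left. apply (strict_max p m s eps); assumption. }
assert (Huniq : forall a a', P a -> is_maximizer eps Delta a' -> a' = a).
{ intros a a' [Ha HP] [Ha' Hmx]. destruct (Req_dec a' a) as [|Hne]; [assumption|].
  exfalso. specialize (Hmx a Ha).
  rewrite (LB_eq p m s eps Delta a'), (LB_eq p m s eps Delta a) in Hmx by assumption.
  pose proof (strict_max p m s eps Delta a a' H1 H2 H3 Hs Hm Hp Ha HP Ha' Hne). lra. }
set (ee := exp (- s * Delta)).
assert (Hee : 0 < ee) by apply exp_pos.
set (As := (1 - s) / 2 + s / (1 + ee)).
assert (HAm : As - m = s / (1 + ee)) by (unfold As, m; ring).
assert (HAm0 : 0 < As - m) by (rewrite HAm; apply Rdiv_lt_0_compat; lra).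
assert (HpA : p - As = (As - m) * ee) by (rewrite HAm; unfold As, p; field; lra).
assert (HpA0 : 0 < p - As) by (rewrite HpA; nra).
assert (DAs : Dg p m s Delta As = 0).
{ unfold Dg. rewrite HpA, ln_mult by lra. unfold ee. rewrite ln_exp. field. lra. }
assert (Hq : (p - 0) / (0 - m) = (s + 1) ^ 2 / (4 * eps)).
{ replace (4 * eps) with (s * s - 1) by lra. unfold p, m. field. lra. }
assert (D0 : Dg p m s Delta 0 = Delta + / s * ln ((s + 1) ^ 2 / (4 * eps))).
{ unfold Dg. rewrite <- Hq, ln_div by lra. reflexivity. }
assert (D1 : Dg p m s Delta 1 = Delta - / s * ln ((s + 1) ^ 2 / (4 * eps))).
{ unfold Dg. rewrite <- Hq, ln_div by lra.
  replace (p - 1) with (0 - m) by lra. replace (1 - m) with (p - 0) by lra. ring. }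
set (T := / s * ln ((s + 1) ^ 2 / (4 * eps))) in *.
assert (Hex : exists a0, P a0).
{ destruct (Rlt_or_le As 0) as [Hlt|Hge].
  - exists 0. split. lra. intros b Hb.
    assert (Dg p m s Delta 0 < Dg p m s Delta As) by (apply Dg_decr; lra). nra.
  - destruct (Rlt_or_le 1 As) as [Hgt|Hle].
    + exists 1. split. lra. intros b Hb.
      assert (Dg p m s Delta As < Dg p m s Delta 1) by (apply Dg_decr; lra). nra.
    + exists As. split. lra. intros b Hb. rewrite DAs. lra. }
destruct Hex as [a0 Ha0].
split.
- exists a0. split. apply HPmax, Ha0. intros a' Ha'. symmetry. apply (Huniq a0 a' Ha0 Ha').
- intros a Ha. pose proof (Huniq a0 a Ha0 Ha) as Ea. subst a.
  destruct Ha0 as [Ha0 HP0]. split.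
  + intros E. rewrite E in Ha0.
    assert (Dg p m s Delta As <= Dg p m s Delta 0) by (apply Dg_decr_le; lra).
    assert (Dg p m s Delta 1 <= Dg p m s Delta As) by (apply Dg_decr_le; lra).
    unfold Rabs. destruct (Rcase_abs Delta); lra.
  + intros HD. assert (HT : - T <= Delta <= T) by (unfold Rabs in HD; destruct (Rcase_abs Delta); lra).
    assert (HA : 0 <= As <= 1).
    { split.
      - destruct (Rlt_or_le As 0) as [Hlt|]; [|assumption].
        assert (Dg p m s Delta 0 < Dg p m s Delta As) by (apply Dg_decr; lra). lra.
      - destruct (Rlt_or_le 1 As) as [Hgt|]; [|assumption].
        assert (Dg p m s Delta As < Dg p m s Delta 1) by (apply Dg_decr; lra). lra. }
    assert (PA : P As) by (split; [exact HA| intros b Hb; rewrite DAs; lra]).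
    apply (Huniq As a0 PA). split; [assumption|].
    intros b Hb. assert (P a0) by (split; assumption).
    destruct (HPmax a0 H) as [_ Hm0]. apply Hm0, Hb.
Qed.
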